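(* For every graph $G$ of order $n\geq 2$ with vertex connectivity $\kappa$, $\operatorname{th}_{\operatorname{H}}^*(G)\geq\left\lceil\frac{n+\kappa}{2}\right\rceil$. In particular, if $G$ is connected then $\operatorname{th}_{\operatorname{H}}^*(G)\geq\left\lceil\frac{n+1}{2}\right\rceil$.
   Context: All graphs are finite, simple and undirected; vertex connectivity follows the usual convention ($\kappa(K_n)=n-1$, $\kappa=0$ for disconnected graphs). Hopping color change rule: a blue vertex $v$ may force a white vertex $w$ to become blue if $v$ has not previously performed a force and every neighbor of $v$ is blue. For an initial blue set $B$, a chronological list of forces of $B$ is a sequence of such forces applied one at a time until no further force is possible; its underlying unordered set is a set of forces of $B$. $B$ is a hopping forcing set if some chronological list of forces of $B$ turns all vertices blue; $\operatorname{H}(G)$ is the minimum size of one. For a set of forces $\mathcal F$ of $B$, let $\mathcal F^{(0)}=B$ and for $t\geq1$ let $\mathcal F^{(t)}$ be the set of vertices $w\notin U_{t-1}:=\bigcup_{i=0}^{t-1}\mathcal F^{(i)}$ for which there is $(v\to w)\in\mathcal F$ with $v\in U_{t-1}$ and all neighbors of $v$ in $U_{t-1}$. $\operatorname{pt}_{\operatorname{H}}(G;\mathcal F)$ is the least $t$ with $\bigcup_{i=0}^t\mathcal F^{(i)}=V(G)$ ($\infty$ if none); $\operatorname{pt}_{\operatorname{H}}(G;B)$ is the minimum over sets of forces $\mathcal F$ of $B$ ($\infty$ if $B$ is not a hopping forcing set). $\operatorname{pt}_{\operatorname{H}}(G,k)=\min\{\operatorname{pt}_{\operatorname{H}}(G;B):|B|=k\}$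 and $\operatorname{th}_{\operatorname{H}}^*(G)=\min_{\operatorname{H}(G)\leq k<n}\{k\cdot\operatorname{pt}_{\operatorname{H}}(G,k)\}$, with the conventions $\min\emptyset=\infty$ and $k\cdot\infty=\infty$. *)

(* Defs.v *)
(* Graphs: symmetric irreflexive relation e on a finType T. *)
From Stdlib Require Import ClassicalEpsilon.
From mathcomp Require Import all_boot.
Set Implicit Arguments. Unset Strict Implicit. Unset Printing Implicit Defensive.

(* Extended naturals N ∪ {∞}: [None] stands for ∞. *)
Notation ninf := (option nat).

Definition obool (P : Prop) : bool :=
  if excluded_middle_informative P then true else false.

Lemma obool_ex (P : nat -> Prop) :
  (exists n, P n) -> exists n, obool (P n).
Proof.
move=> [n Hn]; exists n; rewrite /obool.
by case: excluded_middle_informative.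
Qed.

(* Infimum of a set of naturals in N ∪ {∞}: least element, or ∞ if empty
   (convention min ∅ = ∞). *)
Definition oinf (P : nat -> Prop) : ninf :=
  match excluded_middle_informative (exists n, P n) with
  | left h => Some (ex_minn (obool_ex h))
  | right _ => None
  end.

Definition nle (c : nat) (x : ninf) : Prop :=
  match x with None => True | Some m => c <= m end.

Section Graph.
Variables (T : finType) (e : rel T).

Definition induced (U : {set T}) : rel T :=
  [rel x y | [&& x \in U, y \in U & e x y]].

Definition connected_on (U : {set T}) : bool :=
  [forall x in U, forall y in U, connect (induced U) x y].

Definition cut_or_trivial (S : {set T}) : bool :=
  ~~ connected_on (~: S) || (#|~: S| <= 1).

(* kappa(G) = min |S| s.t. G - S is disconnected or trivial;
   gives kappa(K_n) = n-1 and kappa = 0 for disconnected graphs. *)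
Definition vconn : nat :=
  \big[minn/#|T|]_(S : {set T} | cut_or_trivial S) #|S|.

Definition nbrs_in (U : {set T}) (v : T) : bool :=
  [forall u, e v u ==> (u \in U)].

(* some force is possible with blue set [blue] and set [used] of vertices
   that have already forced *)
Definition can_force (blue used : {set T}) : bool :=
  [exists v, [&& v \in blue, v \notin used, nbrs_in blue v &
                 [exists w, w \notin blue]]].

(* a sequence of forces (v,w) (meaning v -> w), applied one at a time,
   each valid, and ending when no further force is possible *)
Fixpoint chron_ok (blue used : {set T}) (s : seq (T * T)) : bool :=
  match s with
  | [::] => ~~ can_force blue used
  | (v, w) :: s' =>
      [&& v \in blue, v \notin used, nbrs_in blue v, w \notin blue &
          chron_ok (w |: blue) (v |: used) s']
  end.

Definition chron_list (B : {set T}) (s : seq (T * T)) : bool :=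
  chron_ok B set0 s.

Definition final_blue (B : {set T}) (s : seq (T * T)) : {set T} :=
  B :|: [set p.2 | p in [set q in s]].

Definition hop_forcing (B : {set T}) : Prop :=
  exists s, chron_list B s /\ final_blue B s = setT.

(* H(G) (a hopping forcing set always exists, e.g. V(G), so the default
   value 0 of odflt is never used) *)
Definition hopN : nat :=
  odflt 0 (oinf (fun k => exists B : {set T}, #|B| = k /\ hop_forcing B)).

Definition force_set (B : {set T}) (F : {set T * T}) : Prop :=
  exists s, chron_list B s /\ F = [set p in s].

Definition hstep (F : {set T * T}) (U : {set T}) : {set T} :=
  U :|: [set w | (w \notin U) &&
           [exists v, [&& (v, w) \in F, v \in U & nbrs_in U v]]].

Definition Ut (B : {set T}) (F : {set T * T}) (t : nat) : {set T} :=
  iter t (hstep F) B.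

Definition ptF (B : {set T}) (F : {set T * T}) : ninf :=
  oinf (fun t => Ut B F t = setT).

Definition ptB (B : {set T}) : ninf :=
  oinf (fun t => hop_forcing B /\
                 exists F, force_set B F /\ ptF B F = Some t).

Definition ptk (k : nat) : ninf :=
  oinf (fun t => exists B : {set T}, #|B| = k /\ ptB B = Some t).

(* th*_H(G) = min_{H(G) <= k < n} k * pt_H(G,k), with k * ∞ = ∞ *)
Definition thstar : ninf :=
  oinf (fun x => exists k, hopN <= k < #|T| /\
                 exists t, ptk k = Some t /\ x = k * t).

End Graph.

(* Main.v *)
Require Import Defs.
From Stdlib Require Import ClassicalEpsilon.
From mathcomp Require Import all_boot.
From mathcomp Require Import zify.
Set Implicit Arguments. Unset Strict Implicit.

Lemma oinf_some (P : nat -> Prop) m : oinf P = Some m -> P m.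
Proof.
rewrite /oinf; case: excluded_middle_informative => // h [<-].
case: ex_minnP => n Hn _; move: Hn; rewrite /obool.
by case: excluded_middle_informative.
Qed.

Section Core.
Variables (T : finType) (e : rel T).

Lemma Ut_mono (B : {set T}) F i : Ut e B F i \subset Ut e B F i.+1.
Proof. exact: subsetUl. Qed.

Lemma Ut_mono_le (B : {set T}) F i j : i <= j -> Ut e B F i \subset Ut e B F j.
Proof.
elim: j => [|j IH]; first by rewrite leqn0 => /eqP ->.
rewrite leq_eqVlt => /orP [/eqP ->|H]; first exact: subxx.
exact: subset_trans (IH H) (Ut_mono _ _ _).
Qed.

Lemma nbrs_in_mono (U V : {set T}) v : U \subset V -> nbrs_in e U v -> nbrs_in e V v.
Proof.
move=> sUV /forallP H; apply/forallP => u; apply/implyP => euv.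
exact: (subsetP sUV) (implyP (H u) euv).
Qed.

Lemma forcer_exists (B : {set T}) F i w : w \in Ut e B F i.+1 -> w \notin B ->
  exists v, [&& (v,w) \in F, v \in Ut e B F i & nbrs_in e (Ut e B F i) v].
Proof.
elim: i w => [|i IH] w.
  rewrite /Ut /= /hstep inE => /orP [-> //|].
  by rewrite inE => /andP [_ /existsP [v Hv]] _; exists v.
move=> Hw HB; move: Hw; rewrite [Ut _ _ _ i.+2]/Ut iterS -/(Ut e B F i.+1); rewrite /hstep inE => /orP [Hw|].
  have [v /and3P [H1 H2 H3]] := IH w Hw HB.
  exists v; apply/and3P; split => //.
    exact: (subsetP (Ut_mono _ _ _)) H2.
  exact: nbrs_in_mono (Ut_mono _ _ _) H3.
by rewrite inE => /andP [_ /existsP [v Hv]]; exists v.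
Qed.

Lemma chron_uniq (blue used : {set T}) s : chron_ok e blue used s ->
  uniq (map fst s) /\ all (fun p => p.1 \notin used) s.
Proof.
elim: s blue used => [|[v w] s IH] blue used //=.
move=> /and5P [Hv Hvu _ _ Hs]; have [U A] := IH _ _ Hs; split.
  apply/andP; split => //; apply/negP => /mapP [p ps pv].
  by have := allP A p ps; rewrite -pv setU11.
rewrite Hvu /=; apply/allP => p ps; have := allP A p ps.
by rewrite !inE negb_or => /andP [_ ->].
Qed.

Lemma uniq_fst (s : seq (T * T)) v w w' :
  uniq (map fst s) -> (v,w) \in s -> (v,w') \in s -> w = w'.
Proof.
elim: s => [|[a b] s IH] //= /andP [Ha Hu]; rewrite !inE.
case/orP => [/eqP [E1 E2]|H1]; case/orP => [/eqP [E3 E4]|H2].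
- by rewrite E2 E4.
- by case/negP: Ha; apply/mapP; exists (v, w') => //; rewrite E1.
- by case/negP: Ha; apply/mapP; exists (v, w) => //; rewrite E3.
- exact: IH.
Qed.

Lemma force_inj (B : {set T}) F : force_set e B F ->
  forall v w w', (v,w) \in F -> (v,w') \in F -> w = w'.
Proof.
case=> s [Hs ->] v w w'; rewrite !inE => H1 H2.
have [U _] := chron_uniq Hs; exact: uniq_fst U H1 H2.
Qed.

Lemma bigmin_seq (F : {set T} -> nat) n (r : seq {set T}) j :
  j \in r -> \big[minn/n]_(i <- r) F i <= F j.
Proof.
elim: r => [|a r IH] //; rewrite big_cons inE => /orP [/eqP ->|H].
  exact: geq_minl.
exact: leq_trans (geq_minr _ _) (IH H).
Qed.

Lemma vconn_le (C : {set T}) : cut_or_trivial e C -> vconn e <= #|C|.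
Proof.
move=> H; rewrite /vconn -big_filter; apply: bigmin_seq.
by rewrite mem_filter H mem_index_enum.
Qed.

Lemma sep (U S : {set T}) s x : S \subset U ->
  (forall v, v \in S -> nbrs_in e U v) -> s \in S -> x \notin U ->
  cut_or_trivial e (U :\: S).
Proof.
move=> SU HN Hs Hx; apply/orP; left; apply/negP => /forallP H.
have Hs' : s \in ~: (U :\: S) by rewrite !inE Hs.
have Hx' : x \in ~: (U :\: S) by rewrite !inE (negbTE Hx) andbF.
move: (H s) => /implyP /(_ Hs') /forallP /(_ x) /implyP /(_ Hx').
move=> /connectP [p Hp Hl].
have : all (fun y => y \in S) (s :: p).
  elim: p s Hs Hs' Hp {Hl} => [|y p IHp] a Ha Ha' //=; first by rewrite Ha.
  case/andP => /= /and3P [_ Hy Hay] Hp; rewrite Ha /=.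
  apply: IHp => //.
  have /forallP /(_ y) /implyP /(_ Hay) Hyu := HN a Ha.
  by move: Hy; rewrite !inE Hyu andbT negbK.
move/allP => /(_ x); rewrite Hl mem_last => /(_ isT) Hxs.
by move: Hx; rewrite Hl (subsetP SU _ Hxs).
Qed.

Lemma step (B : {set T}) F i : force_set e B F -> Ut e B F i != setT ->
  Ut e B F i.+1 != Ut e B F i ->
  #|Ut e B F i.+1| + vconn e <= #|Ut e B F i| + #|B|.
Proof.
move=> HF HT Hne.
set U := Ut e B F i; set U1 := Ut e B F i.+1.
set P := [set p in F | (p.1 \in U) && nbrs_in e U p.1].
set S := fst @: P.
have BU : B \subset U by exact: (Ut_mono_le B F (leq0n i)).
have UU1 : U \subset U1 by exact: Ut_mono.
have sub1 : U1 :\: B \subset snd @: P.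
  apply/subsetP => w; rewrite inE => /andP [HB Hw].
  have [v /and3P [H1 H2 H3]] := forcer_exists Hw HB.
  by apply/imsetP; exists (v, w) => //; rewrite inE H1 H2 H3.
have cPS : #|P| = #|S|.
  rewrite /S card_in_imset // => [[a b] [c d]]; rewrite !inE /=.
  move=> /andP [H1 _] /andP [H2 _] Eac; rewrite -Eac in H2.
  by rewrite -Eac (force_inj HF H1 H2).
have c1 : #|U1 :\: B| <= #|S|.
  by rewrite -cPS; apply: leq_trans (subset_leq_card sub1) (leq_imset_card _ _).
have cD : #|U1 :\: B| = #|U1| - #|B|.
  by rewrite cardsD (setIidPr (subset_trans BU UU1)).
have SU : S \subset U.
  by apply/subsetP => v /imsetP [p]; rewrite inE => /and3P [_ H _] ->.
have SN : forall v, v \in S -> nbrs_in e U v.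
  by move=> v /imsetP [p]; rewrite inE => /and3P [_ _ H] ->.
have cB : #|B| <= #|U| by exact: subset_leq_card.
have cU : #|U| <= #|U1| by exact: subset_leq_card.
have cS : #|S| <= #|U| by exact: subset_leq_card.
case: (set_0Vmem S) => [S0|[s Hs]].
  exfalso; move: c1; rewrite S0 cards0 cD => c1.
  have : U == U1 by rewrite eqEcard UU1 /=; lia.
  by rewrite eq_sym (negbTE Hne).
have /subsetPn [x _ Hx] : ~~ ([set: T] \subset U) by rewrite subTset.
have := vconn_le (sep SU SN Hs Hx).
rewrite cardsD (setIidPr SU); lia.
Qed.

Lemma iter_fix F (U : {set T}) m : hstep e F U = U -> iter m (hstep e F) U = U.
Proof. by move=> H; elim: m => //= m ->. Qed.

Lemma core (B : {set T}) F t : force_set e B F -> Ut e B F t = setT -> #|B| < #|T| ->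
  #|T| + vconn e <= 2 * #|B| * t.
Proof.
move=> HF HU HB.
have ex : exists t, Ut e B F t == setT by exists t; rewrite HU.
case: (ex_minnP ex) => t0 Ht0 Hmin.
have t0t : t0 <= t by apply: Hmin; rewrite HU.
have t0p : 0 < t0.
  case: t0 Ht0 {Hmin t0t} => // /eqP H; move: HB; rewrite /Ut /= in H.
  by rewrite H cardsT ltnn.
have claim : forall j, j <= t0 -> #|Ut e B F j| + j * vconn e <= #|B| + j * #|B|.
  elim => [|j IH] Hj; first by rewrite /Ut /=; lia.
  have Hne : Ut e B F j != setT.
    by apply/negP => /Hmin; lia.
  have Hne2 : Ut e B F j.+1 != Ut e B F j.
    apply/negP => /eqP Hfix.
    have : Ut e B F ((t0 - j) + j) = Ut e B F j.
      by rewrite /Ut iterD; apply: iter_fix.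
    rewrite subnK; last by lia.
    by move=> E; move: Ht0; rewrite E (negbTE Hne).
  have := step HF Hne Hne2; have := IH (ltnW Hj); lia.
have := claim t0 (leqnn _); rewrite (eqP Ht0) cardsT.
have : t0 * #|B| <= t * #|B| by rewrite leq_mul2r t0t orbT.
have : vconn e <= t0 * vconn e by rewrite leq_pmull.
nia.
Qed.

End Core.

Theorem proposition4p8 (T : finType) (e : rel T)
  (esym : symmetric e) (eirr : irreflexive e) (hn : 2 <= #|T|) :
  nle ((#|T| + vconn e).+1 %/ 2) (thstar e) /\
  (connected_on e setT -> nle ((#|T| + 1).+1 %/ 2) (thstar e)).
Proof.
have key : forall m, (exists k, hopN e <= k < #|T| /\
    exists t, ptk e k = Some t /\ m = k * t) -> #|T| + vconn e <= 2 * m.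
  move=> m [k [/andP [_ Hk] [t [Hpt ->]]]].
  have [B [HB Hb]] := oinf_some Hpt.
  have [_ [F [HF Hpf]]] := oinf_some Hb.
  have HU := oinf_some Hpf.
  rewrite mulnA -HB; apply: core HF HU _; by rewrite HB.
split.
  rewrite /nle; case E: (thstar e) => [m|] //.
  have := key m (oinf_some E); lia.
move=> Hc; rewrite /nle; case E: (thstar e) => [m|] //.
have := key m (oinf_some E).
have : 0 < vconn e.
  rewrite /vconn; apply: (big_ind (fun x => 0 < x)) => //.
  - lia.
  - by move=> x y Hx Hy; rewrite leq_min Hx Hy.
  - move=> S HS; rewrite card_gt0; apply/negP => /eqP S0.
    move: HS; rewrite S0 /cut_or_trivial setC0 Hc /= cardsT; lia.
lia.
Qed.
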